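(* Let $G=(V,E)$ be a finite graph, $p_e\in(0,1)$ and $x_e>0$ for each $e\in E$. Let $\Omega=\{0,1\}^E$, $\Sigma\subset\Omega$, $f:\Omega\to2^\Sigma$, $f(\omega)=\Sigma^\downarrow(\omega):=\{\eta\in\Sigma\mid\eta\subset\omega\}$, and $$\rho[\omega]=\mathbb{P}_p[\omega]\ (\omega\in\Omega),\qquad \gamma[\eta]=\mathbb{P}_{\frac{x}{p+x}}[\eta\mid\Sigma]\propto\prod_{e\in\eta}\frac{x_e}{p_e}\ (\eta\in\Sigma).$$ Let $\mathscr{P}$ be the probability measure on $\Omega\times\Sigma$ with $\mathscr{P}[\omega,\eta]\propto\rho[\omega]\gamma[\eta]\mathbf{1}[\eta\in f(\omega)]$. Then: (a) The marginal $\mathscr{P}_\Sigma$ of $\mathscr{P}$ on $\Sigma$ satisfies $\mathscr{P}_\Sigma[\eta]\propto\prod_{e\in\eta}x_e$. For each $\omega$ with $\mathscr{P}_\Omega[\omega]\neq0$, $\mathscr{P}[\cdot\mid\omega]=\mathbb{P}_{\frac{x}{p+x}}[\cdot\mid\Sigma^\downarrow(\omega)]$. (b) The marginal of $\mathscr{P}$ on $\Omega$ is $\mathscr{P}_\Omega=\mathscr{P}_\Sigma\cup\mathbb{P}_p$. For each $\eta\in\Sigma$ with $\mathscr{P}_\Sigma[\eta]\neq0$, $\mathscr{P}[\cdot\mid\eta]=\mathbb{P}_p\cup\delta_\eta$, i.e. Bernoulli percolation on $E$ with parameters $(p_e)$ conditioned on all edges of $\eta$ being open.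
   Context: Elements of $\{0,1\}^E$ are identified with subsets of $E$ (open edges). For $r=(r_e)\in[0,1]^E$, $\mathbb{P}_r$ is Bernoulli percolation: each edge $e$ open independently with probability $r_e$; $\frac{x}{p+x}$ denotes the vector $(x_e/(p_e+x_e))_e$. $\delta_\eta$ is the Dirac mass at $\eta$. For measures $\pi,\nu$ on $\{0,1\}^E$, $\pi\cup\nu$ is the law of the union of independent samples of $\pi$ and $\nu$ (a measure on $\Sigma\subset\Omega$ being viewed as a measure on $\Omega$). *)

(* Defs.v *)
From mathcomp Require Import all_boot all_order all_algebra.
Set Implicit Arguments. Unset Strict Implicit. Unset Printing Implicit Defensive.
Import Order.TTheory GRing.Theory Num.Theory.
Local Open Scope ring_scope.

(* Configurations omega in {0,1}^E are identified with subsets of E. *)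
Section Defs.
Variables (R : realFieldType) (E : finType).

Definition bern (r : E -> R) (w : {set E}) : R :=
  (\prod_(e in w) r e) * \prod_(e in ~: w) (1 - r e).

Definition condM (mu : {set E} -> R) (A : {set {set E}}) (w : {set E}) : R :=
  if w \in A then mu w / (\sum_(v in A) mu v) else 0.

Definition Sdown (S : {set {set E}}) (w : {set E}) : {set {set E}} :=
  [set eta in S | eta \subset w].

(* union of independent samples *)
Definition unionM (mu nu : {set E} -> R) (w : {set E}) : R :=
  \sum_(a : {set E}) \sum_(b : {set E}) (mu a * nu b) *+ (a :|: b == w).

Definition diracM_ (eta : {set E}) (w : {set E}) : R := (w == eta)%:R.

Definition xpx (p x : E -> R) (e : E) : R := x e / (p e + x e).

Definition gammaM (p x : E -> R) (S : {set {set E}}) : {set E} -> R :=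
  condM (bern (xpx p x)) S.

Definition jweight (p x : E -> R) (S : {set {set E}}) (w eta : {set E}) : R :=
  bern p w * gammaM p x S eta * (eta \in Sdown S w)%:R.

(* the joint probability measure scrP on Omega x Sigma (viewed on Omega x Omega,
   vanishing off Sigma in the second coordinate) *)
Definition jointP (p x : E -> R) (S : {set {set E}}) (w eta : {set E}) : R :=
  jweight p x S w eta /
    (\sum_(w' : {set E}) \sum_(eta' : {set E}) jweight p x S w' eta').

Definition margO (p x : E -> R) (S : {set {set E}}) (w : {set E}) : R :=
  \sum_(eta : {set E}) jointP p x S w eta.

Definition margS (p x : E -> R) (S : {set {set E}}) (eta : {set E}) : R :=
  \sum_(w : {set E}) jointP p x S w eta.

End Defs.
Arguments diracM_ {R E}.

(* Main.v *)
Require Import Defs.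
From mathcomp Require Import all_boot all_order all_algebra ring.
Import Order.TTheory GRing.Theory Num.Theory.
Local Open Scope ring_scope.

Section L.
Variables (R : realFieldType) (E : finType).

Lemma sumK (g : E -> bool -> R) :
  \sum_(b : {set E}) \prod_e g e (e \in b) = \prod_e (g e true + g e false).
Proof.
rewrite (@bigA_distr R 0 1 *%R +%R E (fun e => g e true) (fun e => g e false)).
apply: eq_bigr => b _; apply: eq_bigr => e _; by case: (e \in b).
Qed.

Lemma bernE (r : E -> R) w :
  bern r w = \prod_e (if e \in w then r e else 1 - r e).
Proof.
rewrite /bern (bigID (mem w) predT) /=; congr (_ * _).
  by apply: eq_bigr => e ->.
by apply: eq_big => e; rewrite ?in_setC // => /negbTE ->.
Qed.

Lemma prod_ind (P : pred E) :
  \prod_e ((P e)%:R : R) = ([forall e, P e])%:R.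
Proof.
case: forallP => [H|H].
  by rewrite big1 // => e _; rewrite H.
have [e He] : exists e, ~~ P e.
  by apply/existsP; rewrite -negb_forall; apply/forallP.
by rewrite (bigD1 e) //= (negbTE He) mul0r.
Qed.

Lemma subE (a w : {set E}) :
  ((a \subset w)%:R : R) = \prod_e (((e \in a) ==> (e \in w))%:R).
Proof.
rewrite prod_ind; congr ((nat_of_bool _)%:R); apply/idP/idP => [/subsetP H|/forallP H].
  by apply/forallP => e; apply/implyP/H.
by apply/subsetP => e /(implyP (H e)).
Qed.

Lemma eqE (a b w : {set E}) :
  ((a :|: b == w)%:R : R) = \prod_e ((((e \in a) || (e \in b)) == (e \in w))%:R).
Proof.
rewrite prod_ind; congr ((nat_of_bool _)%:R); apply/idP/idP => [/eqP <-|/forallP H].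
  by apply/forallP => e; rewrite in_setU.
by apply/eqP/setP => e; rewrite in_setU; apply/eqP.
Qed.

Lemma PeE (r : E -> R) (a : {set E}) :
  \prod_(e in a) r e = \prod_e (if e \in a then r e else 1).
Proof. by rewrite big_mkcond. Qed.

Lemma S1 (p : E -> R) (a : {set E}) :
  \sum_(w : {set E}) bern p w * (a \subset w)%:R = \prod_(e in a) p e.
Proof.
pose g := fun e t => (if t then p e else 1 - p e) * ((e \in a) ==> t)%:R.
rewrite (eq_bigr (fun w : {set E} => \prod_e g e (e \in w))); last first.
  by move=> w _; rewrite bernE subE -big_split.
rewrite sumK /g.
rewrite PeE; apply: eq_bigr => e _; case: (e \in a) => /=.
  by rewrite mulr1 mulr0 addr0.
by rewrite !mulr1 subrKC.
Qed.

Lemma S2 (p : E -> R) (a w : {set E}) :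
  \prod_(e in a) p e * \sum_(b : {set E}) bern p b * (a :|: b == w)%:R
  = bern p w * (a \subset w)%:R.
Proof.
pose g := fun e t => (if t then p e else 1 - p e) * (((e \in a) || t) == (e \in w))%:R.
rewrite (eq_bigr (fun b : {set E} => \prod_e g e (e \in b))); last first.
  by move=> b _; rewrite bernE eqE -big_split.
rewrite sumK /g.
rewrite PeE bernE subE -!big_split /=; apply: eq_bigr => e _.
case: (e \in a); case: (e \in w) => /=; rewrite ?mulr1 ?mulr0 ?mul1r ?mul0r ?add0r ?addr0 //.
all: by rewrite ?subrKC ?mulr1 ?mulr0.
Qed.


Lemma bern_gt0 (r : E -> R) w : (forall e, 0 < r e < 1) -> 0 < bern r w.
Proof.
move=> h; apply: mulr_gt0; apply: prodr_gt0 => e _; case/andP: (h e) => // _.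
by rewrite subr_gt0.
Qed.

Lemma sum_gt0 (A : {set {set E}}) (f : {set E} -> R) :
  A != set0 -> (forall v, 0 < f v) -> 0 < \sum_(v in A) f v.
Proof.
case/set0Pn => v0 Hv h; rewrite (bigD1 v0) //=; apply: (lt_le_trans (h v0)).
rewrite lerDl; apply: sumr_ge0 => i _; exact: ltW.
Qed.

Lemma I1 (p x : E -> R) (hp : forall e, 0 < p e < 1) (hx : forall e, 0 < x e) eta :
  bern (xpx p x) eta * \prod_(e in eta) p e
  = (\prod_e (p e / (p e + x e))) * \prod_(e in eta) x e.
Proof.
rewrite bernE !PeE -!big_split /=; apply: eq_bigr => e _.
have hpx : p e + x e != 0.
  case/andP: (hp e) => h1 _; have := hx e => h2.
  by rewrite gt_eqF // addr_gt0.
rewrite /xpx; case: (e \in eta); field; done.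
Qed.

End L.

Theorem proposition3p1 (R : realFieldType) (E : finType)
  (p x : E -> R) (S : {set {set E}})
  (hp : forall e, 0 < p e < 1) (hx : forall e, 0 < x e)
  (hS : S != set0) :
  (* (a) marginal on Sigma is proportional to prod x_e *)
  (forall eta, margS p x S eta = condM (fun a => \prod_(e in a) x e) S eta) /\
  (* (a) conditional law given omega *)
  (forall w, margO p x S w != 0 ->
     forall eta, jointP p x S w eta / margO p x S w
                 = condM (bern (xpx p x)) (Sdown S w) eta) /\
  (* (b) marginal on Omega is P_Sigma U P_p *)
  (forall w, margO p x S w = unionM (margS p x S) (bern p) w) /\
  (* (b) conditional law given eta *)
  (forall eta, eta \in S -> margS p x S eta != 0 ->
     forall w, jointP p x S w eta / margS p x S eta
               = unionM (bern p) (@diracM_ R E eta) w /\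
               jointP p x S w eta / margS p x S eta
               = condM (bern p) [set a : {set E} | eta \subset a] w).
Proof.
set B := bern p; set Q := bern (xpx p x).
pose Pe (a : {set E}) := \prod_(e in a) p e; pose X (a : {set E}) := \prod_(e in a) x e.
pose c := \prod_e (p e / (p e + x e)).
pose Zq := \sum_(v in S) Q v; pose SX := \sum_(v in S) X v.
have hq : forall e, 0 < xpx p x e < 1.
  move=> e; case/andP: (hp e) => h1 h2; have h3 := hx e; rewrite /xpx.
  apply/andP; split; first by rewrite divr_gt0 // addr_gt0.
  by rewrite ltr_pdivrMr ?addr_gt0 // mul1r ltrDr.
have Bpos w : 0 < B w := @bern_gt0 _ _ _ w hp.
have Qpos w : 0 < Q w := @bern_gt0 _ _ _ w hq.
have Pepos a : 0 < Pe a by apply: prodr_gt0 => e _; case/andP: (hp e).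
have Xpos a : 0 < X a by apply: prodr_gt0.
have cpos : 0 < c.
  by apply: prodr_gt0 => e _; case/andP: (hp e) => h1 _; rewrite divr_gt0 // addr_gt0.
have Zqpos : 0 < Zq := @sum_gt0 _ _ _ _ hS Qpos.
have SXpos : 0 < SX := @sum_gt0 _ _ _ _ hS Xpos.
have Pene a : Pe a != 0 by rewrite gt_eqF.
have Xne a : X a != 0 by rewrite gt_eqF.
have cne : c != 0 by rewrite gt_eqF.
have Zqne : Zq != 0 by rewrite gt_eqF.
have SXne : SX != 0 by rewrite gt_eqF.
have Bne w : B w != 0 by rewrite gt_eqF.
have QE eta : Q eta = c * X eta / Pe eta.
  by rewrite -(@I1 _ _ p x hp hx eta) -/(Pe eta) mulfK.
have J w eta : jweight p x S w eta = (eta \in S)%:R * (Q eta / Zq) * (B w * (eta \subset w)%:R).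
  rewrite /jweight /gammaM /condM /Sdown inE -/B -/Q -/Zq.
  by case: (eta \in S); case: (eta \subset w) => /=; ring.
have Zval : \sum_(w' : {set E}) \sum_(eta' : {set E}) jweight p x S w' eta' = c * SX / Zq.
  rewrite exchange_big /=.
  transitivity (\sum_(eta : {set E}) (eta \in S)%:R * (Q eta / Zq) * Pe eta).
    apply: eq_bigr => eta _; rewrite /Pe -(@S1 _ _ p eta) mulr_sumr; apply: eq_bigr => w _.
    by rewrite J.
  rewrite /SX [in RHS]big_mkcond /= mulr_sumr mulr_suml; apply: eq_bigr => eta _.
  case: (eta \in S) => /=; last by rewrite !(mul0r, mulr0).
  rewrite QE; field; by rewrite Pene Zqne.
have jP w eta : jointP p x S w eta
   = (eta \in S)%:R * X eta / SX * (B w * (eta \subset w)%:R / Pe eta).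
  rewrite /jointP Zval J QE.
  case: (eta \in S) => /=; last by rewrite !mul0r.
  field; by rewrite Pene Zqne SXne cne.
have sumT (a : {set E}) : \sum_(w : {set E}) (B w * (a \subset w)%:R / Pe a) = 1.
  by rewrite -mulr_suml (@S1 _ _ p a) divff ?Pene.
have margSE eta : margS p x S eta = (eta \in S)%:R * X eta / SX.
  rewrite /margS; under eq_bigr do rewrite jP.
  by rewrite -mulr_sumr sumT mulr1.
have T2 (a w : {set E}) : \sum_(b : {set E}) B b * (a :|: b == w)%:R = B w * (a \subset w)%:R / Pe a.
  apply: (mulfI (Pene a)); rewrite (@S2 _ _ p a w) -/B; field; exact: Pene.
split.
  move=> eta; rewrite margSE /condM -/SX.
  by case: (eta \in S) => /=; rewrite ?mul1r ?mul0r.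
split.
  move=> w hm eta.
  pose K := B w / Zq / (c * SX / Zq).
  have jP2 (eta' : {set E}) : jointP p x S w eta' = (eta' \in Sdown S w)%:R * Q eta' * K.
    rewrite /jointP Zval J /Sdown inE /K.
    by case: (eta' \in S); case: (eta' \subset w) => /=; field; rewrite ?Zqne ?cne ?SXne.
  pose D := \sum_(v : {set E}) (v \in Sdown S w)%:R * Q v.
  have mO : margO p x S w = D * K.
    by rewrite /margO; under eq_bigr do rewrite jP2; rewrite -mulr_suml.
  have Dne : D != 0 by apply: contraNneq hm => De; rewrite mO De mul0r.
  have Kne : K != 0 by apply: contraNneq hm => Ke; rewrite mO Ke mulr0.
  have sD : \sum_(v in Sdown S w) bern (xpx p x) v = D.
    rewrite big_mkcond /=; apply: eq_bigr => v _.
    by case: (v \in Sdown S w); rewrite ?mul1r ?mul0r.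
  rewrite /condM sD jP2 mO -/Q.
  case: (eta \in Sdown S w) => /=; last by rewrite !mul0r.
  field; by rewrite Dne Kne.
split.
  move=> w; rewrite /margO /unionM; under eq_bigr do rewrite jP.
  apply: eq_bigr => a _.
  transitivity (margS p x S a * \sum_(b : {set E}) B b * (a :|: b == w)%:R).
    by rewrite T2 margSE.
  by rewrite mulr_sumr; apply: eq_bigr => b _; rewrite mulrA mulr_natr.
move=> eta etaS hm w.
have mS : margS p x S eta = X eta / SX by rewrite margSE etaS mul1r.
have -> : jointP p x S w eta / margS p x S eta = B w * (eta \subset w)%:R / Pe eta.
  rewrite jP mS etaS /=; field; by rewrite Xne SXne Pene.
split.
  rewrite /unionM /diracM_.
  transitivity (\sum_(a : {set E}) B a * (eta :|: a == w)%:R); first by rewrite T2.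
  apply: eq_bigr => a _; symmetry; rewrite (bigD1 eta) //= big1 ?addr0.
    by rewrite eqxx mulr1 mulr_natr setUC.
  by move=> b /negbTE ->; rewrite mulr0 mul0rn.
have sP : \sum_(v in [set a : {set E} | eta \subset a]) bern p v = Pe eta.
  rewrite /Pe -(@S1 _ _ p eta) big_mkcond /=; apply: eq_bigr => v _.
  by rewrite inE; case: (eta \subset v); rewrite ?mulr1 ?mulr0.
rewrite /condM sP inE.
by case: (eta \subset w) => /=; rewrite ?mulr1 ?mulr0 ?mul0r.
Qed.
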